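(* A set $\mathcal{O}$ of upwards-closed modalities is decomposable if and only if for any $r\in TT\mathbf{1}$ and $o\in\mathcal{O}$ such that $\mu r\in o(\{*\})$, there is a collection of pairs $\{(o_i,\Phi_i)\}_{i\in I}$ with each $o_i\in\mathcal{O}$ and $\Phi_i\in\mathcal{T}$ such that: (1) for all $i\in I$, $r\in o_i([\![\Phi_i]\!])$; and (2) for all $r'\in TT\mathbf{1}$, if $r'\in o_i([\![\Phi_i]\!])$ for all $i\in I$, then $\mu r'\in o(\{*\})$.
   Context: $\Sigma$ is a signature of effect operations with arities $\alpha^n\to\alpha$, $\mathbf{N}\times\alpha^n\to\alpha$, $\alpha^{\mathbf{N}}\to\alpha$ or $\mathbf{N}\times\alpha^{\mathbf{N}}\to\alpha$. $TX$ is the set of possibly infinite labelled trees with leaves $\bot$ or elements of $X$ and internal nodes labelled by operations (or $\sigma_m$, $m\in\mathbb{N}$) with children according to arity; $t\le t'$ iff $t$ is obtained from $t'$ by replacing subtrees with $\bot$. $\mu:TTX\to TX$ replaces each leaf of a tree of trees by that tree. $\mathbf{1}=\{*\}$. A set $\mathcal{O}$ of modalities is given with $[\![o]\!]\subseteq T\mathbf{1}$; upwards closed means $[\![o]\!]$ is upward closed under $\le$. $t[\in P]\in T\mathbf{1}$ replaces leaves in $P$ by $*$ and other $X$-leaves by $\bot$; $o(A)=\{t\in TX\mid t[\in A]\in[\![o]\!]\}$. $\mathcal{T}$ is the least class of formulas containing $o(\top),o(\bot)$ ($o\in\mathcal{O}$) closed under arbitrary $\bigvee,\bigwedge$, with $[\![o(\top)]\!]=o(\{*\})$,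 $[\![o(\bot)]\!]=o(\emptyset)$, unions/intersections. On $T\mathbf{1}$: $t\trianglelefteq t'$ iff $\forall\Phi\in\mathcal{T}$, $t\in[\![\Phi]\!]\Rightarrow t'\in[\![\Phi]\!]$. On $TT\mathbf{1}$: $r\preccurlyeq r'$ iff $\forall o\,\forall\Phi\in\mathcal{T}$, $r\in o([\![\Phi]\!])\Rightarrow r'\in o([\![\Phi]\!])$. $\mathcal{O}$ is decomposable if $r\preccurlyeq r'$ implies $\mu r\trianglelefteq\mu r'$ for all $r,r'\in TT\mathbf{1}$. *)

(* Defs.v *)
From mathcomp Require Import all_boot.
From Stdlib Require Import ClassicalEpsilon.

Set Implicit Arguments.
Unset Strict Implicit.
Unset Printing Implicit Defensive.

(* Arities of effect operations:
   alpha^n -> alpha, N x alpha^n -> alpha, alpha^N -> alpha, N x alpha^N -> alpha *)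
Inductive arity : Type :=
| ArFin (n : nat)
| ArNatFin (n : nat)
| ArInf
| ArNatInf.

Definition param (a : arity) : Type :=
  match a with
  | ArNatFin _ | ArNatInf => nat
  | _ => unit
  end.

Definition child (a : arity) : Type :=
  match a with
  | ArFin n | ArNatFin n => 'I_n
  | ArInf | ArNatInf => nat
  end.

Section Trees.
Variables (Op : Type) (ar : Op -> arity).

CoInductive tree (X : Type) : Type :=
| Bot
| Leaf (x : X)
| Node (o : Op) (p : param (ar o)) (k : child (ar o) -> tree X).

Arguments Bot {X}.

CoInductive tle (X : Type) : tree X -> tree X -> Prop :=
| tle_bot (t : tree X) : tle Bot t
| tle_leaf (x : X) : tle (Leaf x) (Leaf x)
| tle_node (o : Op) (p : param (ar o)) (k k' : child (ar o) -> tree X) :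
    (forall i, tle (k i) (k' i)) -> tle (Node p k) (Node p k').

CoFixpoint mu (X : Type) (r : tree (tree X)) : tree X :=
  match r with
  | Bot => Bot
  | Leaf t => t
  | Node o p k => Node p (fun i => mu (k i))
  end.

CoFixpoint restr (X : Type) (P : X -> Prop) (t : tree X) : tree unit :=
  match t with
  | Bot => Bot
  | Leaf x => if excluded_middle_informative (P x) then Leaf tt else Bot
  | Node o p k => Node p (fun i => restr P (k i))
  end.

Section Modalities.
Variables (O : Type) (sem : O -> tree unit -> Prop).

Definition upwards_closed : Prop :=
  forall (o : O) (t t' : tree unit), sem o t -> tle t t' -> sem o t'.

Definition modal (X : Type) (o : O) (A : X -> Prop) : tree X -> Prop :=
  fun t => sem o (restr A t).

Inductive formula : Type :=
| FTop (o : O)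
| FBotm (o : O)
| FOr (J : Type) (f : J -> formula)
| FAnd (J : Type) (f : J -> formula).

Fixpoint fsem (phi : formula) : tree unit -> Prop :=
  match phi with
  | FTop o => modal o (fun _ : unit => True)
  | FBotm o => modal o (fun _ : unit => False)
  | FOr J f => fun t => exists i : J, fsem (f i) t
  | FAnd J f => fun t => forall i : J, fsem (f i) t
  end.

Definition tri (t t' : tree unit) : Prop :=
  forall phi : formula, fsem phi t -> fsem phi t'.

Definition prec (r r' : tree (tree unit)) : Prop :=
  forall (o : O) (phi : formula), modal o (fsem phi) r -> modal o (fsem phi) r'.

Definition decomposable : Prop :=
  forall r r' : tree (tree unit), prec r r' -> tri (mu r) (mu r').

End Modalities.
End Trees.

(* Main.v *)
Require Import Defs.
From Stdlib Require Import ClassicalEpsilon.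

Set Implicit Arguments.
Section Aux.
Variables (Op : Type) (ar : Op -> arity).

CoInductive bis (X : Type) : tree ar X -> tree ar X -> Prop :=
| bis_bot : bis (Bot ar X) (Bot ar X)
| bis_leaf (x : X) : bis (Leaf ar x) (Leaf ar x)
| bis_node (o : Op) (p : param (ar o)) (k k' : child (ar o) -> tree ar X) :
    (forall i, bis (k i) (k' i)) -> bis (Node p k) (Node p k').

Definition step (X : Type) (R : tree ar X -> tree ar X -> Prop) (t t' : tree ar X) : Prop :=
  (t = Bot ar X /\ t' = Bot ar X) \/ (exists x, t = Leaf ar x /\ t' = Leaf ar x) \/
  exists o (p : param (ar o)) k k', t = Node p k /\ t' = Node p k' /\ forall i, R (k i) (k' i).

Lemma bis_coind (X : Type) (R : tree ar X -> tree ar X -> Prop) :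
  (forall t t', R t t' -> step (fun a b => R a b \/ bis a b) t t') ->
  forall t t', R t t' \/ bis t t' -> bis t t'.
Proof.
  intros H. cofix CH. intros t t' [Ht|Ht].
  - destruct (H t t' Ht) as [[-> ->]|[[x [-> ->]]|[o [p [k [k' [-> [-> Hk]]]]]]]].
    + constructor.
    + constructor.
    + constructor. intro i. apply CH. apply Hk.
  - destruct Ht.
    + constructor.
    + constructor.
    + constructor. intro i. apply CH. right. auto.
Qed.

Lemma bis_tle (X : Type) : forall t t' : tree ar X, bis t t' -> tle t t'.
Proof.
  cofix CH. intros t t' H. destruct H.
  + constructor.
  + constructor.
  + constructor. intro i. apply CH. auto.
Qed.

Lemma bis_sym (X : Type) : forall t t' : tree ar X, bis t t' -> bis t' t.
Proof.
  cofix CH. intros t t' H. destruct H.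
  + constructor.
  + constructor.
  + constructor. intro i. apply CH. auto.
Qed.

Lemma bis_refl (X : Type) : forall t : tree ar X, bis t t.
Proof.
  cofix CH. intros t. destruct t.
  + constructor.
  + constructor.
  + constructor. intro i. apply CH.
Qed.

Definition frob (X : Type) (t : tree ar X) : tree ar X :=
  match t with Bot => Bot ar X | Leaf x => Leaf ar x | Node _ p k => Node p k end.
Lemma frob_eq (X : Type) (t : tree ar X) : t = frob t.
Proof. destruct t; reflexivity. Qed.

Lemma restr_Bot X (P : X -> Prop) : restr P (Bot ar X) = Bot ar unit.
Proof. rewrite (frob_eq (restr P _)). reflexivity. Qed.
Lemma restr_Leaf X (P : X -> Prop) x :
  restr P (Leaf ar x) = if excluded_middle_informative (P x) then Leaf ar tt else Bot ar unit.
Proof. rewrite (frob_eq (restr P _)). simpl. destruct (excluded_middle_informative (P x)); reflexivity. Qed.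
Lemma restr_Node X (P : X -> Prop) o (p : param (ar o)) k :
  restr P (Node p k) = Node p (fun i => restr P (k i)).
Proof. rewrite (frob_eq (restr P _)). reflexivity. Qed.

Lemma mu_Bot X : mu (Bot ar (tree ar X)) = Bot ar X.
Proof. rewrite (frob_eq (mu _)). reflexivity. Qed.
Lemma mu_Leaf X (t : tree ar X) : mu (Leaf ar t) = t.
Proof. rewrite (frob_eq (mu _)). simpl. destruct t; reflexivity. Qed.
Lemma mu_Node X o (p : param (ar o)) (k : child (ar o) -> tree ar (tree ar X)) :
  mu (Node p k) = Node p (fun i => mu (k i)).
Proof. rewrite (frob_eq (mu _)). reflexivity. Qed.

CoFixpoint mapL (X Y : Type) (f : X -> Y) (r : tree ar X) : tree ar Y :=
  match r with
  | Bot => Bot ar Y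
  | Leaf x => Leaf ar (f x)
  | Node _ p k => Node p (fun i => mapL f (k i))
  end.
Lemma mapL_Bot X Y (f : X -> Y) : mapL f (Bot ar X) = Bot ar Y.
Proof. rewrite (frob_eq (mapL _ _)). reflexivity. Qed.
Lemma mapL_Leaf X Y (f : X -> Y) x : mapL f (Leaf ar x) = Leaf ar (f x).
Proof. rewrite (frob_eq (mapL _ _)). reflexivity. Qed.
Lemma mapL_Node X Y (f : X -> Y) o (p : param (ar o)) k :
  mapL f (Node p k) = Node p (fun i => mapL f (k i)).
Proof. rewrite (frob_eq (mapL _ _)). reflexivity. Qed.

Definition PF : unit -> Prop := fun _ => False.
Definition PT : unit -> Prop := fun _ => True.

Lemma F1 (P : unit -> Prop) (t : tree ar unit) :
  bis (restr P (restr PF t)) (restr PF t).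
Proof.
  apply bis_coind with (R := fun a b => exists t, a = restr P (restr PF t) /\ b = restr PF t).
  2: left; eauto.
  clear t. intros a b [t [-> ->]]. destruct t as [|x|o p k].
  - left. rewrite !restr_Bot. auto.
  - left. rewrite restr_Leaf. destruct (excluded_middle_informative (PF x)) as [f|_].
    + destruct f.
    + rewrite restr_Bot. auto.
  - right; right. exists o, p, (fun i => restr P (restr PF (k i))), (fun i => restr PF (k i)).
    rewrite !restr_Node. split; [reflexivity|split;[reflexivity|]]. intro i. left. eauto.
Qed.

Lemma F2 (r : tree ar (tree ar unit)) :
  bis (restr PF (mu r)) (restr PT (mu (mapL (restr PF) r))).
Proof.
  apply bis_coind with (R := fun a b => exists r, a = restr PF (mu r) /\ b = restr PT (mu (mapL (restr PF) r))).
  2: left; eauto.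
  clear r. intros a b [r [-> ->]]. destruct r as [|t|o p k].
  - left. rewrite mapL_Bot, !mu_Bot, !restr_Bot. auto.
  - rewrite mapL_Leaf, !mu_Leaf.
    pose proof (bis_sym (F1 PT t)) as B. destruct B.
    + left; auto.
    + right; left; eauto.
    + right; right. exists o, p, k, k'. split; [reflexivity|split;[reflexivity|]]. intro i; right; auto.
  - right; right. rewrite mapL_Node, !mu_Node, !restr_Node.
    exists o, p, (fun i => restr PF (mu (k i))), (fun i => restr PT (mu (mapL (restr PF) (k i)))).
    split; [reflexivity|split;[reflexivity|]]. intro i. left. eauto.
Qed.

Lemma F3 X Y (Q : Y -> Prop) (f : X -> Y) (r : tree ar X) :
  bis (restr Q (mapL f r)) (restr (fun x => Q (f x)) r).
Proof.
  apply bis_coind with (R := fun a b => exists r, a = restr Q (mapL f r) /\ b = restr (fun x => Q (f x)) r).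
  2: left; eauto.
  clear r. intros a b [r [-> ->]]. destruct r as [|x|o p k].
  - left. rewrite mapL_Bot, !restr_Bot. auto.
  - rewrite mapL_Leaf, !restr_Leaf.
    destruct (excluded_middle_informative (Q (f x))).
    + right; left; eauto.
    + left; auto.
  - right; right. rewrite mapL_Node, !restr_Node.
    eexists o, p, _, _. split; [reflexivity|split;[reflexivity|]]. intro i. left. eauto.
Qed.

Lemma F4 X (P Q : X -> Prop) (t : tree ar X) :
  (forall x, P x <-> Q x) -> bis (restr P t) (restr Q t).
Proof.
  intro HPQ.
  apply bis_coind with (R := fun a b => exists t, a = restr P t /\ b = restr Q t).
  2: left; eauto.
  clear t. intros a b [t [-> ->]]. destruct t as [|x|o p k].
  - left. rewrite !restr_Bot. auto.
  - rewrite !restr_Leaf.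
    destruct (excluded_middle_informative (P x)) as [h1|h1];
    destruct (excluded_middle_informative (Q x)) as [h2|h2].
    + right; left; eauto.
    + exfalso. apply h2, HPQ, h1.
    + exfalso. apply h1, HPQ, h2.
    + left; auto.
  - right; right. rewrite !restr_Node.
    eexists o, p, _, _. split; [reflexivity|split;[reflexivity|]]. intro i. left. eauto.
Qed.

End Aux.

Lemma sem_bis (Op : Type) (ar : Op -> arity) (O : Type) (sem : O -> tree ar unit -> Prop) :
  upwards_closed sem -> forall o t t', sem o t -> bis t t' -> sem o t'.
Proof. intros Hu o t t' H B. eapply Hu; [exact H|]. apply bis_tle. exact B. Qed.

Fixpoint gF (O : Type) (phi : formula O) : formula O :=
  match phi with
  | FTop o => FBotm o
  | FBotm o => FBotm o
  | FOr _ f => FOr (fun j => gF (f j))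
  | FAnd _ f => FAnd (fun j => gF (f j))
  end.

Lemma gF_spec (Op : Type) (ar : Op -> arity) (O : Type) (sem : O -> tree ar unit -> Prop) :
  upwards_closed sem -> forall phi t, fsem sem (gF phi) t <-> fsem sem phi (restr PF t).
Proof.
  intros Hu phi. induction phi as [o|o|J f IH|J f IH]; intro t; simpl; unfold modal.
  - split; intro H.
    + eapply sem_bis; [exact Hu|exact H|]. apply bis_sym. apply (F1 PT t).
    + eapply sem_bis; [exact Hu|exact H|]. apply (F1 PT t).
  - split; intro H.
    + eapply sem_bis; [exact Hu|exact H|]. apply bis_sym. apply (F1 PF t).
    + eapply sem_bis; [exact Hu|exact H|]. apply (F1 PF t).
  - split; intros [j Hj]; exists j; apply IH; exact Hj.
  - split; intros H j; apply IH; apply H.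
Qed.

Theorem lemma4p17 (Op : Type) (ar : Op -> arity)
  (O : Type) (sem : O -> tree ar unit -> Prop) :
  upwards_closed sem ->
  (decomposable sem <->
   forall (r : tree ar (tree ar unit)) (o : O),
     modal sem o (fun _ : unit => True) (mu r) ->
     exists (J : Type) (oi : J -> O) (Phi : J -> formula O),
       (forall i : J, modal sem (oi i) (fsem sem (Phi i)) r) /\
       (forall r' : tree ar (tree ar unit),
          (forall i : J, modal sem (oi i) (fsem sem (Phi i)) r') ->
          modal sem o (fun _ : unit => True) (mu r'))).
Proof.
  intro Hu. split.
  - intros Hdec r o H.
    exists {p : O * formula O | modal sem (fst p) (fsem sem (snd p)) r},
      (fun p => fst (proj1_sig p)), (fun p => snd (proj1_sig p)).
    split.
    + intros [[o' phi] h]. exact h.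
    + intros r' H'. apply (Hdec r r') with (phi := FTop o); [|exact H].
      intros o' phi h. exact (H' (exist _ (o', phi) h)).
  - intros Hc r r' Hprec phi. induction phi as [o|o|J f IH|J f IH]; simpl.
    + intro H. destruct (Hc r o H) as [J [oi [Phi [H1 H2]]]].
      apply H2. intro i. apply Hprec. apply H1.
    + intro H. unfold modal in H.
      assert (H0 : modal sem o PT (mu (mapL (restr PF) r))).
      { unfold modal. eapply sem_bis; [exact Hu|exact H|]. apply F2. }
      destruct (Hc _ o H0) as [J [oi [Phi [H1 H2]]]].
      assert (H3 : modal sem o PT (mu (mapL (restr PF) r'))).
      { apply H2. intro i. specialize (H1 i). unfold modal in H1 |- *.
        assert (H4 : modal sem (oi i) (fsem sem (gF (Phi i))) r).
        { unfold modal. eapply sem_bis; [exact Hu| |].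
          - eapply sem_bis; [exact Hu|exact H1|]. apply F3.
          - apply F4. intro x. symmetry. apply gF_spec. exact Hu. }
        apply Hprec in H4. unfold modal in H4.
        eapply sem_bis; [exact Hu| |apply bis_sym; apply F3].
        eapply sem_bis; [exact Hu|exact H4|]. apply F4. intro x. apply gF_spec. exact Hu. }
      unfold modal in H3 |- *. eapply sem_bis; [exact Hu|exact H3|]. apply bis_sym. apply F2.
    + intros [j Hj]. exists j. apply IH. exact Hj.
    + intros H j. apply IH. apply H.
Qed.
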